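(* Let $\theta_0=[\mathrm{vec}(A_0)^T,\mathrm{vec}(M_0)^T]^T$ with $A_0\in\mathbb{R}^{(p_2-r)\times r}$, $\|A_0\|_2<1$, and $M_0\in\mathbb{R}^{p_1\times r}$ of full column rank $r$. Then $D\Sigma(\theta_0)^TD\Sigma(\theta_0)$ is invertible and $$\|\{D\Sigma(\theta_0)^TD\Sigma(\theta_0)\}^{-1}\|_2\le\begin{cases}1+\dfrac{(1+8\|M_0\|_2^2)(1+\|A_0\|_2^2)^4}{4\sigma_r^2(M_0)(1-\|A_0\|_2^2)^2},& r\ge2,\\[2mm]1+\dfrac{(1+8\|M_0\|_2^2)(1+\|A_0\|_2^2)^2}{4\sigma_r^2(M_0)},& r=1.\end{cases}$$
   Context: Fix integers $r\le\min(p_1,p_2)$. For $A\in\mathbb{R}^{(p_2-r)\times r}$ write $\varphi=\mathrm{vec}(A)$, $X_\varphi=\begin{bmatrix}0_{r\times r}&-A^{T}\\ A&0\end{bmatrix}\in\mathbb{R}^{p_2\times p_2}$, $I_{p_2\times r}=\begin{bmatrix}I_r\\0\end{bmatrix}$, Cayley parameterization $U(\varphi)=(I_{p_2}+X_\varphi)(I_{p_2}-X_\varphi)^{-1}I_{p_2\times r}$ with derivative $DU(\varphi)=2[I_{p_2\times r}^T(I_{p_2}-X_\varphi)^{-T}\otimes(I_{p_2}-X_\varphi)^{-1}]\Gamma$, $\Gamma=(I_{p_2^2}-K_{p_2p_2})(\Theta_1^T\otimes\Theta_2^T)$, $\Theta_1=I_{p_2\times r}^T$, $\Theta_2=[0_{(p_2-r)\times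 r},I_{p_2-r}]$; $K_{pq}$ is the commutation matrix ($\mathrm{vec}(N^T)=K_{pq}\mathrm{vec}(N)$ for $N\in\mathbb{R}^{p\times q}$). For $\mu=\mathrm{vec}(M)$, $M\in\mathbb{R}^{p_1\times r}$, and $\theta=[\varphi^T,\mu^T]^T$, set $\Sigma(\theta)=MU(\varphi)^T\in\mathbb{R}^{p_1\times p_2}$, $D_\varphi\Sigma(\theta)=K_{p_2p_1}(M\otimes I_{p_2})DU(\varphi)$, $D_\mu\Sigma(\theta)=U(\varphi)\otimes I_{p_1}$, $D\Sigma(\theta)=[D_\varphi\Sigma(\theta),D_\mu\Sigma(\theta)]$. $\sigma_r(M_0)$ is the $r$-th (smallest) singular value of $M_0$. *)

(* Defs.v *)
From HB Require Import structures.
From mathcomp Require Import all_boot all_order all_algebra.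
From mathcomp Require Import classical_sets reals.
Set Implicit Arguments. Unset Strict Implicit. Unset Printing Implicit Defensive.
Import Order.TTheory GRing.Theory Num.Theory.
Local Open Scope ring_scope.
Local Open Scope classical_set_scope.

Section Defs.
Variable R : realType.

Definition vnorm n (x : 'cV[R]_n) : R := Num.sqrt (\sum_i (x i 0) ^+ 2).

Definition opnorm m n (A : 'M[R]_(m, n)) : R :=
  sup [set vnorm (A *m x) | x in [set x : 'cV[R]_n | vnorm x = 1]].

Definition sigma_min p r (M : 'M[R]_(p, r)) : R :=
  Num.sqrt (inf [set a : R | eigenvalue (M^T *m M) a]).

(* column-major vec: vec N : 'cV_(q*p) for N : 'M_(p,q); entry N i j sits at
   index mxvec_index j i = j*p + i *)
Definition vec p q (N : 'M[R]_(p, q)) : 'cV[R]_(q * p) := (mxvec N^T)^T.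

(* Kronecker product: (A (x) B)[(i,k),(j,l)] = A i j * B k l, with row index
   i*p+k and column index j*s+l *)
Definition kron m n p s (A : 'M[R]_(m, n)) (B : 'M[R]_(p, s)) : 'M[R]_(m * p, n * s) :=
  \matrix_(a, b) \sum_(i < m) \sum_(k < p) \sum_(j < n) \sum_(l < s)
     ((a == mxvec_index i k)%:R * (b == mxvec_index j l)%:R * A i j * B k l).

(* commutation matrix K_{pq}: vec (N^T) = K_{pq} vec N for N : 'M_(p,q) *)
Definition commat p q : 'M[R]_(p * q, q * p) :=
  \matrix_(a, b) \sum_(i < p) \sum_(j < q)
     ((a == mxvec_index i j)%:R * (b == mxvec_index j i)%:R).

(* Dimensions: p2 = r + q with q = p2 - r. *)
Variables (r q p1 : nat).

Definition Ipr : 'M[R]_(r + q, r) := col_mx 1%:M 0.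
Definition Theta1 : 'M[R]_(r, r + q) := Ipr^T.
Definition Theta2 : 'M[R]_(q, r + q) := row_mx 0 1%:M.

Definition Xphi (A : 'M[R]_(q, r)) : 'M[R]_(r + q) := block_mx 0 (- A^T) A 0.

Definition Ucay (A : 'M[R]_(q, r)) : 'M[R]_(r + q, r) :=
  (1%:M + Xphi A) *m invmx (1%:M - Xphi A) *m Ipr.

Definition Gam : 'M[R]_((r + q) * (r + q), r * q) :=
  (1%:M - commat (r + q) (r + q)) *m kron Theta1^T Theta2^T.

Definition DU (A : 'M[R]_(q, r)) : 'M[R]_(r * (r + q), r * q) :=
  2%:R *: (kron (Ipr^T *m (invmx (1%:M - Xphi A))^T) (invmx (1%:M - Xphi A)) *m Gam).

Definition DSigma_phi (A : 'M[R]_(q, r)) (M : 'M[R]_(p1, r)) :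
  'M[R]_((r + q) * p1, r * q) :=
  commat (r + q) p1 *m kron M (1%:M : 'M[R]_(r + q)) *m DU A.

Definition DSigma_mu (A : 'M[R]_(q, r)) : 'M[R]_((r + q) * p1, r * p1) :=
  kron (Ucay A) (1%:M : 'M[R]_p1).

Definition DSigma (A : 'M[R]_(q, r)) (M : 'M[R]_(p1, r)) :
  'M[R]_((r + q) * p1, r * q + r * p1) :=
  row_mx (DSigma_phi A M) (DSigma_mu A).

End Defs.

(* Main.v *)
Require Import Defs.
From HB Require Import structures.
From mathcomp Require Import all_boot all_order all_algebra.
From mathcomp Require Import boolp classical_sets reals.
From mathcomp Require Import ring lra zify.
Import Order.TTheory GRing.Theory Num.Theory.
Local Open Scope ring_scope.

Module Helpers.
Set Implicit Arguments. Unset Strict Implicit. Unset Printing Implicit Defensive.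
Section Aux.
Variable R : realType.

Definition dot n (x y : 'cV[R]_n) : R := (x^T *m y) 0 0.
Definition nz n (x : 'cV[R]_n) : R := dot x x.

Lemma dotE n (x y : 'cV[R]_n) : dot x y = \sum_i x i 0 * y i 0.
Proof. by rewrite /dot mxE; apply: eq_bigr => i _; rewrite mxE. Qed.

Lemma dotC n (x y : 'cV[R]_n) : dot x y = dot y x.
Proof. by rewrite !dotE; apply: eq_bigr => i _; rewrite mulrC. Qed.

Lemma dotDr n (x y z : 'cV[R]_n) : dot x (y + z) = dot x y + dot x z.
Proof. by rewrite !dotE -big_split; apply: eq_bigr => i _; rewrite mxE mulrDr. Qed.

Lemma dotDl n (x y z : 'cV[R]_n) : dot (y + z) x = dot y x + dot z x.
Proof. by rewrite dotC dotDr !(dotC x). Qed.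

Lemma dotZr n a (x y : 'cV[R]_n) : dot x (a *: y) = a * dot x y.
Proof. by rewrite !dotE mulr_sumr; apply: eq_bigr => i _; rewrite mxE mulrCA. Qed.

Lemma dotZl n a (x y : 'cV[R]_n) : dot (a *: x) y = a * dot x y.
Proof. by rewrite dotC dotZr dotC. Qed.

Lemma dotNr n (x y : 'cV[R]_n) : dot x (- y) = - dot x y.
Proof. by rewrite -scaleN1r dotZr mulN1r. Qed.

Lemma dotNl n (x y : 'cV[R]_n) : dot (- x) y = - dot x y.
Proof. by rewrite dotC dotNr dotC. Qed.

Lemma dotBr n (x y z : 'cV[R]_n) : dot x (y - z) = dot x y - dot x z.
Proof. by rewrite dotDr dotNr. Qed.

Lemma dot0r n (x : 'cV[R]_n) : dot x 0 = 0.
Proof. by rewrite dotE big1 // => i _; rewrite mxE mulr0. Qed.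

Lemma dot_mull m n (L : 'M[R]_(m, n)) x y : dot (L *m x) y = dot x (L^T *m y).
Proof. by rewrite /dot trmx_mul mulmxA. Qed.

Lemma nzE n (x : 'cV[R]_n) : nz x = \sum_i x i 0 ^+ 2.
Proof. by rewrite /nz dotE; apply: eq_bigr => i _; rewrite expr2. Qed.

Lemma nz_ge0 n (x : 'cV[R]_n) : 0 <= nz x.
Proof. by rewrite nzE sumr_ge0 // => i _; rewrite sqr_ge0. Qed.

Lemma nz_eq0 n (x : 'cV[R]_n) : nz x = 0 -> x = 0.
Proof.
rewrite nzE => /eqP; rewrite psumr_eq0 => [/allP H|i _]; last by rewrite sqr_ge0.
apply/matrixP => i j; rewrite ord1 mxE.
by have /(_ (mem_index_enum i)) := H i; rewrite /= sqrf_eq0 => /eqP.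
Qed.

Lemma nz_gt0 n (x : 'cV[R]_n) : x != 0 -> 0 < nz x.
Proof. by move=> nx; rewrite lt_def nz_ge0 andbT; apply/eqP => /nz_eq0 /eqP; rewrite (negbTE nx). Qed.

Lemma nzN n (x : 'cV[R]_n) : nz (- x) = nz x.
Proof. by rewrite /nz dotNl dotNr opprK. Qed.

Lemma nzZ n a (x : 'cV[R]_n) : nz (a *: x) = a ^+ 2 * nz x.
Proof. by rewrite /nz dotZl dotZr mulrA -expr2. Qed.

Lemma nzD n (x y : 'cV[R]_n) : nz (x + y) = nz x + 2%:R * dot x y + nz y.
Proof. by rewrite /nz dotDl !dotDr (dotC y x); ring. Qed.

Lemma nz0 n : nz (0 : 'cV[R]_n) = 0.
Proof. by rewrite /nz dot0r. Qed.

Lemma quad_disc (a b c : R) : 0 <= c -> (forall t, 0 <= a + 2%:R * b * t + c * t ^+ 2) ->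
  b ^+ 2 <= a * c.
Proof.
move=> c0 H; have a0 : 0 <= a by have := H 0; rewrite !mulr0 expr0n /= mulr0 !addr0.
have [cz|cp] := eqVneq c 0.
  have [bz|bn] := eqVneq b 0; first by rewrite bz cz expr0n /= mulr0.
  have := H (- (a + 1) / (2%:R * b)).
  rewrite cz mul0r addr0 mulrA mulrC mulrA mulVf ?mul1r; last by rewrite mulf_eq0 negb_or bn pnatr_eq0.
  lra.
have cg : 0 < c by rewrite lt_def cp c0.
have := H (- b / c).
have -> : a + 2%:R * b * (- b / c) + c * (- b / c) ^+ 2 = a - b ^+ 2 / c.
  by field; rewrite cp.
rewrite subr_ge0 ler_pdivrMr //.
Qed.

Definition qf n (H : 'M[R]_n) (z : 'cV[R]_n) := dot z (H *m z).

Lemma qf_sym n (H : 'M[R]_n) y z : H^T = H -> dot z (H *m y) = dot y (H *m z).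
Proof. by move=> HT; rewrite dotC dot_mull HT. Qed.

Lemma psd_cs n (H : 'M[R]_n) y z : H^T = H -> (forall w, 0 <= qf H w) ->
  dot y (H *m z) ^+ 2 <= qf H y * qf H z.
Proof.
move=> HT Hp; apply: quad_disc => [|t]; first exact: Hp.
have := Hp (y + t *: z); rewrite /qf mulmxDr -scalemxAr dotDl !dotDr !dotZl !dotZr.
by rewrite (qf_sym y z HT); congr (0 <= _); ring.
Qed.

Lemma cs n (y z : 'cV[R]_n) : dot y z ^+ 2 <= nz y * nz z.
Proof.
have := @psd_cs n 1%:M y z (trmx1 _ _) (fun w => _).
by rewrite /qf !mul1mx; apply => w; rewrite mul1mx nz_ge0.
Qed.

Lemma dot_le n (y z : 'cV[R]_n) : 2%:R * dot y z <= nz y + nz z.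
Proof. by have := nz_ge0 (y - z); rewrite nzD nzN dotNr; lra. Qed.

Lemma nz_mul_bound m n (L : 'M[R]_(m, n)) : exists2 B, 0 <= B & forall z, nz (L *m z) <= B * nz z.
Proof.
exists (\sum_i nz (row i L)^T); first by rewrite sumr_ge0 // => i _; exact: nz_ge0.
move=> z; rewrite nzE mulr_suml; apply: ler_sum => i _.
have -> : (L *m z) i 0 = dot (row i L)^T z.
  by rewrite dotE mxE; apply: eq_bigr => k _; rewrite !mxE.
by rewrite cs.
Qed.

Lemma mul_inj_unit n (H : 'M[R]_n) : (forall z : 'cV_n, H *m z = 0 -> z = 0) -> H \in unitmx.
Proof.
move=> Hi; rewrite -unitmx_tr -row_free_unit; apply/inj_row_free => v hv.
apply: trmx_inj; rewrite trmx0; apply: Hi.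
by rewrite -[H]trmxK -trmx_mul hv trmx0.
Qed.

Lemma pd_bound n (H : 'M[R]_n) : H^T = H -> (forall w, 0 <= qf H w) -> H \in unitmx ->
  exists2 c, 0 < c & forall z, c * nz z <= qf H z.
Proof.
move=> HT Hp Hu.
have [B1 B10 hB1] := nz_mul_bound H.
have [B2 B20 hB2] := nz_mul_bound (invmx H).
pose K0 := B2 * ((1 + B1) / 2%:R) + 1.
have K0p : 0 < K0 by rewrite /K0; apply: ltr_wpDl => //; apply: mulr_ge0 => //; lra.
exists K0^-1; first by rewrite invr_gt0.
move=> z; rewrite mulrC ler_pdivrMr // mulrC.
have hq : qf H (H *m z) <= (1 + B1) / 2%:R * nz (H *m z).
  have := dot_le (H *m z) (H *m (H *m z)); have := hB1 (H *m z); rewrite /qf; lra.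
have hcs := psd_cs z (H *m z) HT Hp.
have e1 : dot z (H *m (H *m z)) = nz (H *m z) by rewrite /nz dotC dot_mull HT.
rewrite e1 in hcs.
have hz : nz z <= B2 * nz (H *m z) by rewrite -{1}(mulKmx Hu z) hB2.
have q0 := Hp z.
have [e0|ne0] := eqVneq (nz (H *m z)) 0.
  have : z = 0 by rewrite -(mulKmx Hu z) (nz_eq0 e0) mulmx0.
  move=> ez; rewrite ez nz0; apply: mulr_ge0; [exact: ltW | by rewrite -ez].
have np : 0 < nz (H *m z) by rewrite lt_def ne0 nz_ge0.
have h2 : nz (H *m z) <= (1 + B1) / 2%:R * qf H z.
  have h3 : nz (H *m z) ^+ 2 <= qf H z * ((1 + B1) / 2%:R * nz (H *m z)).
    apply: (le_trans hcs); apply: ler_wpM2l => //.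
  rewrite expr2 in h3; rewrite -(ler_pM2r np); apply: (le_trans h3).
  by rewrite le_eqVlt; apply/orP; left; apply/eqP; ring.
rewrite /K0; nra.
Qed.
Lemma vnormE n (x : 'cV[R]_n) : vnorm x = Num.sqrt (nz x).
Proof. by rewrite /vnorm nzE. Qed.

Lemma vnorm1 n (x : 'cV[R]_n) : vnorm x = 1 -> nz x = 1.
Proof. by rewrite vnormE => h; rewrite -(sqr_sqrtr (nz_ge0 x)) h expr1n. Qed.

Local Open Scope classical_set_scope.

Lemma opnorm_ub m n (A : 'M[R]_(m, n)) :
  has_ubound [set vnorm (A *m x) | x in [set x : 'cV[R]_n | vnorm x = 1]].
Proof.
have [B B0 hB] := nz_mul_bound A.
exists (Num.sqrt B) => _ [x /= /vnorm1 hx <-].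
by rewrite vnormE ler_sqrt // -[B]mulr1 -hx hB.
Qed.

Lemma opnorm_le m n (A : 'M[R]_(m, n)) z : nz (A *m z) <= opnorm A ^+ 2 * nz z.
Proof.
have [->|zn] := eqVneq z 0; first by rewrite mulmx0 !nz0 mulr0.
have zp := nz_gt0 zn; set s := Num.sqrt (nz z).
have sp : 0 < s by rewrite sqrtr_gt0.
have s2 : s ^+ 2 = nz z by rewrite sqr_sqrtr // ltW.
pose x := s^-1 *: z.
have hx : vnorm x = 1.
  by rewrite vnormE /x nzZ -s2 exprVn mulVf ?sqrtr1 // expf_neq0 // gt_eqF.
have hin : vnorm (A *m x) <= opnorm A.
  by apply: ub_le_sup; [exact: opnorm_ub | exists x].
rewrite /x -scalemxAr vnormE nzZ sqrtrM ?sqr_ge0 // sqrtr_sqr in hin.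
rewrite ger0_norm in hin; last by rewrite invr_ge0 ltW.
have h1 : Num.sqrt (nz (A *m z)) <= opnorm A * s 
  by have := ler_wpM2l (ltW sp) hin; rewrite mulrA mulfV ?gt_eqF // mul1r mulrC.
have h0 := sqrtr_ge0 (nz (A *m z)).
rewrite -s2 -(sqr_sqrtr (nz_ge0 (A *m z))) -exprMn.
by apply: lerXn2r => //; rewrite nnegrE //; apply: le_trans h1.
Qed.

Lemma opnorm_ge0 m n (A : 'M[R]_(m, n)) : 0 <= opnorm A.
Proof.
rewrite /opnorm; set S := [set _ | _ in _].
have [[e Se]|S0] := pselect (S !=set0).
  by apply: le_trans (ub_le_sup (opnorm_ub A) Se); case: Se => x _ <-; rewrite vnormE sqrtr_ge0.
have -> : S = set0 by apply/eqP; apply: contra_notT S0 => h; apply/set0P.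
by rewrite sup0.
Qed.

Lemma opnorm_le_ub m n (A : 'M[R]_(m, n)) K : 0 <= K ->
  (forall x, nz x = 1 -> Num.sqrt (nz (A *m x)) <= K) -> opnorm A <= K.
Proof.
move=> K0 hK; rewrite /opnorm; set S := [set _ | _ in _].
have [SN|S0] := pselect (S !=set0).
  by apply: ge_sup => // _ [x /= /vnorm1 hx <-]; rewrite vnormE hK.
have -> : S = set0 by apply/eqP; apply: contra_notT S0 => h; apply/set0P.
by rewrite sup0.
Qed.
Lemma normalize n (z : 'cV[R]_n) : z != 0 ->
  nz ((Num.sqrt (nz z))^-1 *: z) = 1.
Proof.
move=> zn; have zp := nz_gt0 zn.
by rewrite nzZ exprVn sqr_sqrtr ?mulVf // ?gt_eqF // ltW.
Qed.

Lemma qfZ n (H : 'M[R]_n) a z : qf H (a *: z) = a ^+ 2 * qf H z.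
Proof. by rewrite /qf -scalemxAr dotZl dotZr mulrA -expr2. Qed.

Lemma qf_rayleigh n (H : 'M[R]_n) mu :
  (forall x, nz x = 1 -> mu <= qf H x) -> forall z, mu * nz z <= qf H z.
Proof.
move=> h z; have [->|zn] := eqVneq z 0; first by rewrite nz0 mulr0 /qf mulmx0 dot0r.
have := h _ (normalize zn); rewrite qfZ exprVn sqr_sqrtr ?nz_ge0 // => h1.
have zp := nz_gt0 zn.
by rewrite -ler_pdivlMr // mulrC.
Qed.

Lemma sigma_min_prop p r (M : 'M[R]_(p, r)) : (0 < r)%N -> \rank M = r ->
  0 < sigma_min M /\ forall z, sigma_min M ^+ 2 * nz z <= nz (M *m z).
Proof.
move=> r0 rk.
set G := M^T *m M.
have GT : G^T = G by rewrite /G trmx_mul trmxK.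
have qG z : qf G z = nz (M *m z) by rewrite /qf /G /nz dot_mull mulmxA.
have Gp w : 0 <= qf G w by rewrite qG nz_ge0.
have Minj z : M *m z = 0 -> z = 0.
  move=> h; have rf : row_free M^T by rewrite /row_free mxrank_tr rk.
  apply: trmx_inj; rewrite trmx0; apply: (row_free_inj rf).
  by rewrite -trmx_mul h trmx0 mul0mx.
have Gu : G \in unitmx.
  apply: mul_inj_unit => z hz; apply: Minj; apply: nz_eq0.
  by rewrite -qG /qf hz dot0r.
have [c c0 hc] := pd_bound GT Gp Gu.
pose Ry := [set qf G z | z in [set z : 'cV[R]_r | nz z = 1]].
have z1n : (const_mx 1 : 'cV[R]_r) != 0.
  apply/negP => /eqP /matrixP /(_ (Ordinal r0) 0); rewrite !mxE => /eqP.
  by rewrite oner_eq0.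
have Ryn : Ry !=set0.
  set z1 := (Num.sqrt (nz (const_mx 1 : 'cV[R]_r)))^-1 *: (const_mx 1 : 'cV[R]_r).
  exists (qf G z1); exists z1; last by [].
  exact: normalize.
have Ryl : lbound Ry c by move=> _ [x /= hx <-]; rewrite -[c]mulr1 -hx hc.
set mu := inf Ry.
have cmu : c <= mu by apply: lb_le_inf.
have mu0 : 0 < mu by apply: lt_le_trans cmu.
have hRy : has_lbound Ry by exists c.
have ray : forall z, mu * nz z <= qf G z.
  by apply: qf_rayleigh => x hx; apply: ge_inf => //; exists x.
set H := G - mu%:M.
have HT : H^T = H by rewrite /H linearB /= GT tr_scalar_mx.
have qH z : qf H z = qf G z - mu * nz z.
  by rewrite /qf /H mulmxBl mul_scalar_mx dotBr dotZr.
have Hp w : 0 <= qf H w by rewrite qH subr_ge0 ray.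
have Hnu : H \notin unitmx.
  apply/negP => Hu; have [c' c'0 hc'] := pd_bound HT Hp Hu.
  have : mu + c' <= mu.
    apply: lb_le_inf => // _ [x /= hx <-].
    by have := hc' x; rewrite qH hx !mulr1; lra.
  lra.
have ev : eigenvalue G mu by rewrite /eigenvalue /eigenspace kermx_eq0 row_free_unit.
have evlb : lbound [set a | eigenvalue G a] mu.
  move=> a /= /eigenvalueP [v hv vn].
  have zn : v^T != 0 by apply: contraNneq vn => h; rewrite -[v]trmxK h trmx0.
  have e1 : qf G v^T = a * nz v^T.
    by rewrite /qf -{1}GT -trmx_mul hv linearZ /= /nz dotZr.
  have := ray v^T; rewrite e1 => h.
  by rewrite -(ler_pM2r (nz_gt0 zn)).
have Einf : inf [set a | eigenvalue G a] = mu.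
  apply/eqP; rewrite eq_le; apply/andP; split.
    by apply: ge_inf => //; exists mu.
  by apply: lb_le_inf => //; exists mu.
have sE : sigma_min M = Num.sqrt mu by rewrite /sigma_min -/G Einf.
split; first by rewrite sE sqrtr_gt0.
by move=> z; rewrite sE (sqr_sqrtr (ltW mu0)) -qG; apply: ray.
Qed.
End Aux.

Section Kron.
Variable R : realType.

Lemma mxvec_index_eq m n (i i' : 'I_m) (j j' : 'I_n) :
  (mxvec_index i j == mxvec_index i' j') = (i == i') && (j == j').
Proof. by rewrite /mxvec_index (inj_eq (@cast_ord_inj _ _ _)) (inj_eq enum_rank_inj). Qed.

Lemma sum_mxvec m n (F : 'I_(m * n) -> R) :
  \sum_k F k = \sum_i \sum_j F (mxvec_index i j).
Proof.
rewrite (reindex (uncurry (@mxvec_index m n))) /=; last first.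
  by have [g h1 h2] := curry_mxvec_bij m n; exists g => x _; [apply: h1 | apply: h2].
by rewrite pair_big /=; apply: eq_bigr => -[i j] _.
Qed.

Lemma sum_delta n (i : 'I_n) (F : 'I_n -> R) : \sum_i' (i == i')%:R * F i' = F i.
Proof.
rewrite (bigD1 i) //= eqxx mul1r big1 ?addr0 // => i' ne.
by rewrite eq_sym (negbTE ne) mul0r.
Qed.

Lemma bool4 (b1 b2 b3 b4 : bool) (x y : R) :
  (b1 && b2)%:R * (b3 && b4)%:R * x * y = b1%:R * (b2%:R * (b3%:R * (b4%:R * (x * y)))).
Proof. by case: b1; case: b2; case: b3; case: b4; rewrite /=; ring. Qed.

Lemma kronE m n p s (A : 'M[R]_(m, n)) (B : 'M[R]_(p, s)) i k j l :
  kron A B (mxvec_index i k) (mxvec_index j l) = A i j * B k l.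
Proof.
rewrite /kron mxE.
under eq_bigr => i' _ do under eq_bigr => k' _ do under eq_bigr => j' _ do
  under eq_bigr => l' _ do rewrite !mxvec_index_eq bool4.
under eq_bigr => i' _ do under eq_bigr => k' _ do under eq_bigr => j' _ do
  rewrite -mulr_sumr.
under eq_bigr => i' _ do under eq_bigr => k' _ do rewrite -mulr_sumr.
under eq_bigr => i' _ do rewrite -mulr_sumr.
rewrite sum_delta.
under eq_bigr => k' _ do under eq_bigr => j' _ do rewrite -mulr_sumr.
under eq_bigr => k' _ do rewrite -mulr_sumr.
rewrite sum_delta.
under eq_bigr => j' _ do rewrite -mulr_sumr.
rewrite sum_delta.
by rewrite sum_delta.
Qed.

Lemma vecE p q (N : 'M[R]_(p, q)) i j : vec N (mxvec_index j i) 0 = N i j.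
Proof. by rewrite /vec mxE mxvecE mxE. Qed.

Lemma vec_kron m n p s (A : 'M[R]_(m, n)) (B : 'M[R]_(p, s)) (N : 'M[R]_(s, n)) :
  kron A B *m vec N = vec (B *m N *m A^T).
Proof.
apply/matrixP => a z; rewrite ord1; case/mxvec_indexP: a => i k.
rewrite vecE mxE sum_mxvec mxE.
apply: eq_bigr => j _.
rewrite mxE mxE mulr_suml; apply: eq_bigr => l _.
rewrite kronE vecE; ring.
Qed.

Lemma commatE p q (i : 'I_p) (j : 'I_q) b :
  commat R p q (mxvec_index i j) b = (b == mxvec_index j i)%:R.
Proof.
rewrite /commat mxE.
under eq_bigr => i' _ do under eq_bigr => j' _ do rewrite mxvec_index_eq.
rewrite (bigD1 i) //= [X in _ + X]big1 ?addr0; last first.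
  by move=> i' ne; apply: big1 => j' _; rewrite eq_sym (negbTE ne) /= mul0r.
rewrite (bigD1 j) //= [X in _ + X]big1 ?addr0; last first.
  by move=> j' ne; rewrite eqxx eq_sym (negbTE ne) /= mul0r.
by rewrite !eqxx mul1r.
Qed.

Lemma vec_commat p q (N : 'M[R]_(p, q)) : commat R p q *m vec N = vec N^T.
Proof.
apply/matrixP => a z; rewrite ord1; case/mxvec_indexP: a => i j.
rewrite vecE mxE mxE sum_mxvec.
under eq_bigr => j' _ do under eq_bigr => i' _ do rewrite commatE mxvec_index_eq vecE.
rewrite (bigD1 j) //= [X in _ + X]big1 ?addr0; last first.
  by move=> j' ne; apply: big1 => i' _; rewrite (negbTE ne) /= mul0r.
rewrite (bigD1 i) //= [X in _ + X]big1 ?addr0; last first.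
  by move=> i' ne; rewrite eqxx (negbTE ne) /= mul0r.
by rewrite !eqxx mul1r.
Qed.

Lemma vecD p q (N P : 'M[R]_(p, q)) : vec (N + P) = vec N + vec P.
Proof. by apply/matrixP => a z; rewrite ord1; case/mxvec_indexP: a => j i; rewrite [RHS]mxE !vecE mxE. Qed.

Lemma vecN p q (N : 'M[R]_(p, q)) : vec (- N) = - vec N.
Proof. by apply/matrixP => a z; rewrite ord1; case/mxvec_indexP: a => j i; rewrite [RHS]mxE !vecE mxE. Qed.

Lemma vecZ p q a (N : 'M[R]_(p, q)) : vec (a *: N) = a *: vec N.
Proof. by apply/matrixP => b z; rewrite ord1; case/mxvec_indexP: b => j i; rewrite [RHS]mxE !vecE mxE. Qed.

Lemma vec_surj p q (v : 'cV[R]_(q * p)) : vec ((vec_mx v^T)^T : 'M_(p, q)) = v.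
Proof. by rewrite /vec trmxK vec_mxK trmxK. Qed.

End Kron.

Section Frob.
Variable R : realType.

Lemma col_mul m n p j (L : 'M[R]_(m, n)) (Z : 'M[R]_(n, p)) : col j (L *m Z) = L *m col j Z.
Proof. by apply/matrixP => i k; rewrite !mxE; apply: eq_bigr => l _; rewrite !mxE. Qed.

Definition frob m n (N : 'M[R]_(m, n)) : R := \sum_i \sum_j N i j ^+ 2.

Lemma nz_vec p q (N : 'M[R]_(p, q)) : nz (vec N) = frob N.
Proof.
rewrite nzE sum_mxvec exchange_big /=; apply: eq_bigr => i _; apply: eq_bigr => j _.
by rewrite vecE.
Qed.

Lemma frob_tr m n (N : 'M[R]_(m, n)) : frob N^T = frob N.
Proof. by rewrite /frob exchange_big; apply: eq_bigr => i _; apply: eq_bigr => j _; rewrite mxE. Qed.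

Lemma frob_col m n (N : 'M[R]_(m, n)) : frob N = \sum_j nz (col j N).
Proof.
rewrite /frob exchange_big; apply: eq_bigr => j _; rewrite nzE.
by apply: eq_bigr => i _; rewrite mxE.
Qed.

Lemma frob_ge0 m n (N : 'M[R]_(m, n)) : 0 <= frob N.
Proof. by rewrite frob_col sumr_ge0 // => j _; exact: nz_ge0. Qed.

Lemma frob_eq0 m n (N : 'M[R]_(m, n)) : frob N = 0 -> N = 0.
Proof.
rewrite -nz_vec => /nz_eq0 h.
by rewrite -[N]trmxK -[N^T]mxvecK -[mxvec N^T]trmxK -/(vec N) h !linear0.
Qed.

Lemma frob_mul_le c m n p (L : 'M[R]_(m, n)) (Z : 'M[R]_(n, p)) :
  (forall z, nz (L *m z) <= c * nz z) -> frob (L *m Z) <= c * frob Z.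
Proof.
move=> h; rewrite !frob_col mulr_sumr; apply: ler_sum => j _.
by rewrite col_mul h.
Qed.

Lemma frob_mul_ge c m n p (L : 'M[R]_(m, n)) (Z : 'M[R]_(n, p)) :
  (forall z, c * nz z <= nz (L *m z)) -> c * frob Z <= frob (L *m Z).
Proof.
move=> h; rewrite !frob_col mulr_sumr; apply: ler_sum => j _.
by rewrite col_mul h.
Qed.

Lemma frob_mulr_le c m n p (Z : 'M[R]_(m, n)) (Rm : 'M[R]_(n, p)) :
  (forall z, nz (Rm^T *m z) <= c * nz z) -> frob (Z *m Rm) <= c * frob Z.
Proof. by move=> h; rewrite -(frob_tr (Z *m Rm)) trmx_mul -(frob_tr Z); apply: frob_mul_le. Qed.

Lemma frob_mulr_ge c m n p (Z : 'M[R]_(m, n)) (Rm : 'M[R]_(n, p)) :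
  (forall z, c * nz z <= nz (Rm^T *m z)) -> c * frob Z <= frob (Z *m Rm).
Proof. by move=> h; rewrite -(frob_tr (Z *m Rm)) trmx_mul -(frob_tr Z); apply: frob_mul_ge. Qed.

Lemma frob_row_mx m n1 n2 (P : 'M[R]_(m, n1)) (N : 'M[R]_(m, n2)) :
  frob (row_mx P N) = frob P + frob N.
Proof.
rewrite /frob -big_split; apply: eq_bigr => i _.
by rewrite big_split_ord /=; congr (_ + _); apply: eq_bigr => j _; rewrite ?row_mxEl ?row_mxEr.
Qed.

Lemma nz_col_mx n1 n2 (u : 'cV[R]_n1) (d : 'cV[R]_n2) : nz (col_mx u d) = nz u + nz d.
Proof.
by rewrite !nzE big_split_ord /=; congr (_ + _); apply: eq_bigr => j _; rewrite ?col_mxEu ?col_mxEd.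
Qed.

Lemma sq_split (e p n : R) : 0 < e -> (1 - e) * p ^+ 2 + (1 - e^-1) * n ^+ 2 <= (p + n) ^+ 2.
Proof.
move=> e0; rewrite -subr_ge0.
have -> : (p + n) ^+ 2 - ((1 - e) * p ^+ 2 + (1 - e^-1) * n ^+ 2) = (e * p + n) ^+ 2 / e.
  by field; rewrite gt_eqF.
by rewrite divr_ge0 ?sqr_ge0 // ltW.
Qed.

Lemma frob_split e m n (P N : 'M[R]_(m, n)) : 0 < e ->
  (1 - e) * frob P + (1 - e^-1) * frob N <= frob (P + N).
Proof.
move=> e0; rewrite /frob !mulr_sumr -big_split; apply: ler_sum => i _.
rewrite !mulr_sumr -big_split; apply: ler_sum => j _.
by rewrite mxE sq_split.
Qed.

Lemma frob_add_le m n (P N : 'M[R]_(m, n)) : frob (P + N) <= 2%:R * frob P + 2%:R * frob N.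
Proof.
rewrite /frob !mulr_sumr -big_split; apply: ler_sum => i _.
rewrite !mulr_sumr -big_split; apply: ler_sum => j _.
rewrite mxE -subr_ge0.
have -> : 2%:R * P i j ^+ 2 + 2%:R * N i j ^+ 2 - (P i j + N i j) ^+ 2 = (P i j - N i j) ^+ 2 by ring.
exact: sqr_ge0.
Qed.

Lemma frobZ a m n (N : 'M[R]_(m, n)) : frob (a *: N) = a ^+ 2 * frob N.
Proof.
rewrite /frob mulr_sumr; apply: eq_bigr => i _; rewrite mulr_sumr; apply: eq_bigr => j _.
by rewrite mxE exprMn.
Qed.

Lemma frobN m n (N : 'M[R]_(m, n)) : frob (- N) = frob N.
Proof. by rewrite -scaleN1r frobZ sqrrN expr1n mul1r. Qed.

Lemma nz_orth n (Q : 'M[R]_n) z : Q^T *m Q = 1%:M -> nz (Q *m z) = nz z.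
Proof. by move=> h; rewrite /nz dot_mull mulmxA h mul1mx. Qed.

Lemma frob_orth m n (Y : 'M[R]_(m, n)) (Q : 'M[R]_n) : Q^T *m Q = 1%:M ->
  frob (Y *m Q^T) = frob Y.
Proof.
move=> h; rewrite -frob_tr trmx_mul trmxK -(frob_tr Y) !frob_col.
by apply: eq_bigr => j _; rewrite col_mul nz_orth.
Qed.

Lemma nz_tr_le c m n (L : 'M[R]_(m, n)) : 0 <= c ->
  (forall z, nz (L *m z) <= c * nz z) -> forall w, nz (L^T *m w) <= c * nz w.
Proof.
move=> c0 h w.
have e1 : nz (L^T *m w) = dot w (L *m (L^T *m w)) by rewrite /nz dot_mull trmxK.
have h1 := cs w (L *m (L^T *m w)); rewrite -e1 in h1.
have h2 := h (L^T *m w).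
have h3 := nz_ge0 w; have h4 := nz_ge0 (L^T *m w).
have [z0|zp] := eqVneq (nz (L^T *m w)) 0; first by rewrite z0 mulr_ge0.
have zpos : 0 < nz (L^T *m w) by rewrite lt_def zp h4.
have : nz (L^T *m w) ^+ 2 <= (c * nz w) * nz (L^T *m w).
  apply: (le_trans h1); rewrite [c * _]mulrC -mulrA; exact: ler_wpM2l.
by rewrite expr2 ler_pM2r.
Qed.

End Frob.

Section Core.
Variable R : realType.

Lemma inv_comm n (P Q : 'M[R]_n) : P *m Q = Q *m P -> P \in unitmx -> Q \in unitmx ->
  invmx P *m invmx Q = invmx Q *m invmx P.
Proof.
move=> PQ uP uQ.
have h1 : invmx Q *m P = P *m invmx Q.
  rewrite -{1}[invmx Q *m P]mulmx1 -(mulmxV uQ) mulmxA -(mulmxA (invmx Q)) PQ.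
  by rewrite mulmxA mulVmx // mul1mx.
rewrite -{1}[invmx P *m invmx Q]mulmx1 -(mulmxV uP) mulmxA -(mulmxA (invmx P)) h1.
by rewrite mulmxA mulVmx // mul1mx.
Qed.

Lemma Xphi_tr r q (A : 'M[R]_(q, r)) : (Xphi A)^T = - Xphi A.
Proof. by rewrite /Xphi tr_block_mx opp_block_mx !trmx0 !oppr0 linearN /= trmxK opprK. Qed.

Lemma skew_dot n (X : 'M[R]_n) z : X^T = - X -> dot z (X *m z) = 0.
Proof.
move=> h; have : dot z (X *m z) = - dot z (X *m z).
  by rewrite -{2}[X]opprK -h mulNmx dotNr opprK dotC dot_mull.
move/eqP; rewrite -subr_eq0 opprK -mulr2n -mulr_natr mulf_eq0 pnatr_eq0 orbF.
by move/eqP.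
Qed.

Lemma skew_units n (X : 'M[R]_n) : X^T = - X ->
  (1%:M - X) \in unitmx /\ (1%:M + X) \in unitmx.
Proof.
move=> h; split; apply: mul_inj_unit => z hz; apply: nz_eq0.
  have : dot z ((1%:M - X) *m z) = 0 by rewrite hz dot0r.
  by rewrite mulmxBl mul1mx dotBr skew_dot // subr0.
have : dot z ((1%:M + X) *m z) = 0 by rewrite hz dot0r.
by rewrite mulmxDl mul1mx dotDr skew_dot // addr0.
Qed.

Lemma gram_unit m n (L : 'M[R]_(m, n)) : (1%:M + L^T *m L) \in unitmx.
Proof.
apply: mul_inj_unit => z hz; apply: nz_eq0.
have : dot z ((1%:M + L^T *m L) *m z) = 0 by rewrite hz dot0r.
rewrite mulmxDl mul1mx dotDr -mulmxA -dot_mull => h.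
have := nz_ge0 z; have := nz_ge0 (L *m z); rewrite /nz in h *; lra.
Qed.

Variables (r q : nat) (A : 'M[R]_(q, r)).
Local Notation X := (Xphi A).
Local Notation S := (1%:M + A^T *m A).
Local Notation T := (1%:M + A *m A^T).
Local Notation C := (invmx (1%:M - Xphi A)).
Local Notation E := (invmx (1%:M + Xphi A)).

Lemma Su : S \in unitmx. Proof. exact: gram_unit. Qed.
Lemma Tu : T \in unitmx. Proof. by have := gram_unit A^T; rewrite trmxK. Qed.
Lemma Cu : (1%:M - X) \in unitmx. Proof. by have [] := skew_units (Xphi_tr A). Qed.
Lemma Eu : (1%:M + X) \in unitmx. Proof. by have [] := skew_units (Xphi_tr A). Qed.

Lemma ST : S^T = S. Proof. by rewrite linearD /= trmx1 trmx_mul trmxK. Qed.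
Lemma TT : T^T = T. Proof. by rewrite linearD /= trmx1 trmx_mul trmxK. Qed.
Lemma SiT : (invmx S)^T = invmx S. Proof. by rewrite trmx_inv ST. Qed.
Lemma TiT : (invmx T)^T = invmx T. Proof. by rewrite trmx_inv TT. Qed.

Lemma push1 : A *m invmx S = invmx T *m A.
Proof.
have h : A *m S = T *m A by rewrite mulmxDr mulmxDl mulmx1 mul1mx mulmxA.
by rewrite -[RHS](mulmxK Su) -(mulmxA (invmx T)) h mulKmx // Tu.
Qed.

Lemma push2 : invmx S *m A^T = A^T *m invmx T.
Proof. by apply: trmx_inj; rewrite !trmx_mul trmxK SiT TiT push1. Qed.

Lemma one_block : (1%:M : 'M[R]_(r + q)) = block_mx 1%:M 0 0 1%:M.
Proof. exact: scalar_mx_block. Qed.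

Lemma CIpr : C *m Ipr R r q = col_mx (invmx S) (A *m invmx S).
Proof.
have h : (1%:M - X) *m col_mx (invmx S) (A *m invmx S) = Ipr R r q.
  rewrite one_block /Xphi opp_block_mx add_block_mx mul_block_col /Ipr.
  rewrite !subr0 !sub0r opprK !mul1mx mulmxA -{1}[invmx S]mul1mx -!mulmxDl mulmxV ?Su //.
  by rewrite addNr mul0mx.
by rewrite -h mulKmx // Cu.
Qed.

Local Notation Si := (invmx S).
Local Notation Ti := (invmx T).

Lemma hSi : Si *m A^T *m A = 1%:M - Si.
Proof.
have := mulVmx Su; rewrite mulmxDr mulmx1 => h.
by rewrite -mulmxA; apply/eqP; rewrite eq_sym subr_eq [_ + Si]addrC h.
Qed.

Lemma hTi : Ti *m A *m A^T = 1%:M - Ti.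
Proof.
have := mulVmx Tu; rewrite mulmxDr mulmx1 => h.
by rewrite -mulmxA; apply/eqP; rewrite eq_sym subr_eq [_ + Ti]addrC h.
Qed.

Variable Ad : 'M[R]_(q, r).
Definition W1 := 2%:R *: (Si *m (A^T *m Ad - Ad^T *m A) *m Si).
Definition W2 := 2%:R *: (Ti *m (A *m Ad^T *m A + Ad) *m Si).

Lemma eW1 : W1 = 2%:R *: (Si *m A^T *m Ad *m Si - Si *m Ad^T *m A *m Si).
Proof. by rewrite /W1 mulmxBr mulmxBl !mulmxA. Qed.

Lemma eATW2 : A^T *m W2 =
  2%:R *: (Ad^T *m A *m Si - Si *m Ad^T *m A *m Si + Si *m A^T *m Ad *m Si).
Proof.
rewrite /W2 -scalemxAr; congr (_ *: _).
rewrite !mulmxA -push2 mulmxDr mulmxDl !mulmxA hSi !mulmxBl !mul1mx.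
by [].
Qed.

Lemma eAW1 : A *m W1 =
  2%:R *: (Ad *m Si - Ti *m Ad *m Si - Ti *m A *m Ad^T *m A *m Si).
Proof.
rewrite eW1 -scalemxAr; congr (_ *: _).
rewrite mulmxBr !mulmxA push1 hTi !mulmxBl !mul1mx.
by [].
Qed.

Lemma eW2 : W2 = 2%:R *: (Ti *m A *m Ad^T *m A *m Si + Ti *m Ad *m Si).
Proof. by rewrite /W2 mulmxDr mulmxDl !mulmxA. Qed.

Lemma zid1 (V : zmodType) (a1 a2 a3 : V) : a1 - a2 - (a3 - a2 + a1) = - a3.
Proof. by rewrite opprD opprB addrC addrA addrNK addrAC subrr add0r. Qed.
Lemma zid2 (V : zmodType) (a1 a2 a3 : V) : a1 - a2 - a3 + (a3 + a2) = a1.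
Proof. by rewrite -addrA addKr subrK. Qed.

Lemma Wblocks : 2%:R *: (E *m Xphi Ad *m C *m Ipr R r q) = col_mx W1 W2.
Proof.
have key : (1%:M + X) *m col_mx W1 W2 = 2%:R *: (Xphi Ad *m (C *m Ipr R r q)).
  rewrite CIpr one_block /Xphi add_block_mx !mul_block_col scale_col_mx.
  rewrite !addr0 !add0r !mul1mx !mul0mx !add0r !addr0 !mulNmx.
  congr col_mx.
    by rewrite eATW2 eW1 -scalerBr zid1 mulmxA.
  by rewrite eAW1 eW2 -scalerDr zid2.
by rewrite -[RHS](mulKmx Eu) key -scalemxAr !mulmxA.
Qed.

Lemma zid3 (V : zmodType) (a b c : V) : a + b - (b + c) = a - b + (b - c).
Proof. by rewrite opprD addrA addrK addrA subrK. Qed.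

Lemma comm_pm : (1%:M - X) *m (1%:M + X) = (1%:M + X) *m (1%:M - X).
Proof. by rewrite mulmxBl mulmxDl !mulmxDr !mul1mx !mulmx1 !mulmxN zid3. Qed.

Lemma CE : C *m E = E *m C.
Proof. exact: inv_comm comm_pm Cu Eu. Qed.

Local Notation Q := ((1%:M + Xphi A) *m C).

Lemma QTQ : Q^T *m Q = 1%:M.
Proof.
rewrite trmx_mul trmx_inv linearB linearD /= trmx1 Xphi_tr opprK.

rewrite mulmxA -(mulmxA _ (1%:M - X)) comm_pm mulmxA mulVmx ?Eu // mul1mx.
by rewrite mulmxV ?Cu.
Qed.

Lemma QW : Q *m (2%:R *: (E *m Xphi Ad *m C *m Ipr R r q)) =
  2%:R *: (C *m Xphi Ad *m C *m Ipr R r q).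
Proof.
rewrite -scalemxAr; congr (_ *: _).
by rewrite !mulmxA -(mulmxA _ C E) CE mulmxA mulmxV ?Eu // mul1mx.
Qed.

Lemma Xd_eq : (Theta2 R r q)^T *m Ad *m (Theta1 R r q)^T^T
   - ((Theta2 R r q)^T *m Ad *m (Theta1 R r q)^T^T)^T = Xphi Ad.
Proof.
rewrite trmxK /Theta2 /Theta1 /Ipr tr_row_mx tr_col_mx !trmx0 !trmx1 mul_col_mx mul_col_row.
rewrite !mul0mx !mul1mx !mulmx1 !mulmx0 tr_block_mx !trmx0 opp_block_mx add_block_mx /Xphi.
by rewrite !oppr0 !addr0 !add0r.
Qed.

Lemma Gam_vec : Gam R r q *m vec Ad = vec (Xphi Ad).
Proof.
rewrite /Gam -mulmxA vec_kron mulmxBl mul1mx vec_commat -vecN -vecD.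
by rewrite Xd_eq.
Qed.

Lemma DU_vec : DU A *m vec Ad = vec (2%:R *: (C *m Xphi Ad *m C *m Ipr R r q)).
Proof.
rewrite /DU -scalemxAl -mulmxA Gam_vec vec_kron vecZ.
by rewrite trmx_mul !trmxK !mulmxA.
Qed.

Variables (p1 : nat) (M Md : 'M[R]_(p1, r)).

Lemma D_vec : DSigma A M *m col_mx (vec Ad) (vec Md) =
  vec (row_mx (M *m W1^T + Md) (M *m W2^T) *m Q^T).
Proof.
rewrite /DSigma mul_row_col /DSigma_phi /DSigma_mu -!mulmxA DU_vec vec_kron vec_kron.
rewrite !mul1mx vec_commat -vecD; congr vec.
rewrite -QW Wblocks /Ucay !trmx_mul !trmxK !mulmxA -mulmxDl; congr (_ *m _).
rewrite -mulmxDl; congr (_ *m _). rewrite /Ipr !tr_col_mx trmx1 trmx0 !mul_mx_row mulmx1 mulmx0 add_row_mx addr0.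
by rewrite addrC.
Qed.

End Core.

Section Bounds.
Variable R : realType.

Lemma dot_le4 n (u w : 'cV[R]_n) : dot u w <= nz u + nz w / 4%:R.
Proof.
have := dot_le u ((2%:R)^-1 *: w); rewrite dotZr nzZ.
have e : (2%:R : R)^-1 ^+ 2 = 4%:R^-1 by rewrite exprVn -natrX.
rewrite e; have h2 : (2%:R : R) * ((2%:R)^-1 * dot u w) = dot u w.
  by rewrite mulrA mulfV ?mul1r // pnatr_eq0.
by rewrite h2 mulrC.
Qed.

Section Gram.
Variables (m n : nat) (L : 'M[R]_(m, n)).
Local Notation S := (1%:M + L^T *m L).

Lemma S_dot y : dot y (S *m y) = nz y + nz (L *m y).
Proof. by rewrite mulmxDl mul1mx dotDr -mulmxA -dot_mull. Qed.

Lemma Si_le1 z : nz (invmx S *m z) <= nz z.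
Proof.
set y := invmx S *m z.
have hz : S *m y = z by rewrite /y mulKVmx // gram_unit.
have := S_dot y; rewrite hz => h.
have := dot_le y z; have := nz_ge0 (L *m y); lra.
Qed.

Lemma SiLT_le z : nz (invmx S *m L^T *m z) <= nz z / 4%:R.
Proof.
set y := invmx S *m L^T *m z.
have hz : S *m y = L^T *m z by rewrite /y -mulmxA mulKVmx // gram_unit.
have := S_dot y; rewrite hz -dot_mull => h.
have := dot_le4 (L *m y) z; lra.
Qed.

Lemma Si_ge (c : R) : 0 <= c -> (forall z, nz (L *m z) <= c * nz z) ->
  (forall w, nz (L^T *m w) <= c * nz w) ->
  forall z, ((1 + c) ^+ 2)^-1 * nz z <= nz (invmx S *m z).
Proof.
move=> c0 hL hLT z; set y := invmx S *m z.
have hz : S *m y = z by rewrite /y mulKVmx // gram_unit.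
have e1 : nz z = nz y + 2%:R * nz (L *m y) + nz (L^T *m (L *m y)).
  rewrite -hz mulmxDl mul1mx nzD -mulmxA; congr (_ + _ + _).
  by rewrite -dot_mull.
have h1 := hL y; have h2 := hLT (L *m y).
have h3 : nz z <= (1 + c) ^+ 2 * nz y.
  rewrite e1; have := nz_ge0 y; have := nz_ge0 (L *m y); nra.
rewrite mulrC ler_pdivrMr ?exprn_gt0 //; first by rewrite mulrC.
lra.
Qed.
End Gram.

Lemma frob_lower m n (P U : 'M[R]_(m, n)) (be : R) : 0 <= be -> be <= 1 ->
  frob U <= be ^+ 2 * frob P -> (1 - be) ^+ 2 * frob P <= frob (P + U).
Proof.
move=> b0 b1 hU.
have [bz|bn] := eqVneq be 0.
  rewrite bz expr0n /= mul0r in hU.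
  have : U = 0 by apply: frob_eq0; apply/eqP; rewrite eq_le hU frob_ge0.
  by move=> ->; rewrite addr0 bz subr0 expr1n mul1r.
have bp : 0 < be by rewrite lt_def bn b0.
have := frob_split P U bp.
have hn : 1 - be^-1 <= 0 by rewrite subr_le0 invf_ge1 //.
have : (1 - be^-1) * (be ^+ 2 * frob P) <= (1 - be^-1) * frob U.
  by apply: ler_wnM2l.
have e : (1 - be^-1) * (be ^+ 2 * frob P) = (be ^+ 2 - be) * frob P.
  by field; rewrite bn.
rewrite e; have := frob_ge0 P; nra.
Qed.

Lemma small_tr r (N : 'M[R]_r) : (r <= 1)%N -> N^T = N.
Proof.
move=> r1; apply/matrixP => i j; rewrite mxE.
have -> : i = j; last by [].
by apply: ord_inj; have := ltn_ord i; have := ltn_ord j; lia.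
Qed.

Lemma final_gen m n (Dm : 'M[R]_(m, n)) (k : R) : 0 < k ->
  (forall v, k * nz v <= nz (Dm *m v)) ->
  (Dm^T *m Dm \in unitmx) /\ opnorm (invmx (Dm^T *m Dm)) <= k^-1.
Proof.
move=> k0 hk.
have qG v : dot v (Dm^T *m Dm *m v) = nz (Dm *m v) by rewrite /nz -mulmxA -dot_mull.
have Gu : Dm^T *m Dm \in unitmx.
  apply: mul_inj_unit => z hz; apply: nz_eq0.
  have := hk z; rewrite -qG hz dot0r => h.
  have := nz_ge0 z; have : 0 <= k * nz z -> 0 <= nz z by rewrite pmulr_rge0.
  move: h; nra.
split => //; apply: opnorm_le_ub; first by rewrite invr_ge0 ltW.
move=> x hx; set y := invmx _ *m x.
have hy : Dm^T *m Dm *m y = x by rewrite /y mulKVmx.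
have h1 := hk y; rewrite -qG hy in h1.
have h2 := cs y x; rewrite hx mulr1 in h2.
have y0 := nz_ge0 y.
have h3 : nz y <= k^-2.
  have [e0|ne0] := eqVneq (nz y) 0; first by rewrite e0 invr_ge0 exprn_ge0 // ltW.
  have yp : 0 < nz y by rewrite lt_def ne0 y0.
  have h4 : (k * nz y) ^+ 2 <= nz y.
    have dp : 0 <= k * nz y by rewrite mulr_ge0 // ltW.
    apply: (le_trans _ h2); rewrite !expr2; nra.
  rewrite exprMn in h4.
  have h5 : k ^+ 2 * nz y <= 1.
    by rewrite -(ler_pM2r yp) mul1r -mulrA -expr2.
  have kp2 : 0 < k ^+ 2 by rewrite exprn_gt0.
  by rewrite -(ler_pM2l kp2) mulfV ?gt_eqF.
have ki0 : 0 <= k^-1 by rewrite invr_ge0 ltW.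
by rewrite -(ger0_norm ki0) -sqrtr_sqr ler_sqrt ?sqr_ge0 // exprVn.
Qed.

End Bounds.

Section Final.
Variable R : realType.

Lemma scalar_main (g a2 x y F1 G F : R) : 0 < g -> 0 <= a2 -> 0 <= x -> 0 <= y ->
  0 <= F1 -> F1 <= 4%:R * a2 * x -> g * x <= G ->
  (1 - (1 + 8%:R * a2) / (g + (1 + 8%:R * a2))) * y
    + (1 - ((1 + 8%:R * a2) / (g + (1 + 8%:R * a2)))^-1) * F1 <= F ->
  g / (g + (1 + 8%:R * a2)) * (x + y) <= F + G.
Proof.
move=> g0 a0 x0 y0 F0 F1b Gb hF.
set c := 1 + 8%:R * a2.
have c0 : 0 < c by rewrite /c; lra.
have gc0 : 0 < g + c by lra.
set k := g / (g + c); set t := g / c.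
have e1 : 1 - c / (g + c) = k by rewrite /k; field; rewrite gt_eqF.
have e2 : 1 - (c / (g + c))^-1 = - t by rewrite /t; field; rewrite !gt_eqF.
rewrite e1 e2 in hF.
have t0 : 0 <= t by rewrite /t divr_ge0 // ltW.
have kt : k <= t by rewrite /k /t; apply: ler_wpM2l; [exact: ltW | rewrite lef_pV2 ?posrE //; lra].
have tc : t * c = g by rewrite /t mulfVK ?gt_eqF.
have h1 : t * F1 <= t * (4%:R * a2 * x) by apply: ler_wpM2l.
have h2 : t * (1 + 4%:R * a2) <= g by rewrite -tc ler_wpM2l // /c; lra.
have h3 : (k + 4%:R * a2 * t) * x <= g * x.
  by apply: ler_wpM2r => //; apply: le_trans h2; lra.
nra.
Qed.

Section WB.
Variables (r q : nat) (A : 'M[R]_(q, r)) (b2 : R).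
Hypotheses (b20 : 0 <= b2) (b21 : b2 <= 1)
  (hA : forall z, nz (A *m z) <= b2 * nz z) (hAT : forall z, nz (A^T *m z) <= b2 * nz z).

Lemma W1_bound Ad : frob (W1 A Ad) <= 4%:R * frob Ad.
Proof.
rewrite eW1 frobZ.
set P := invmx _ *m A^T *m Ad *m invmx _.
set N := invmx _ *m Ad^T *m A *m invmx _.
have hP : frob P <= 4%:R^-1 * frob Ad.
  rewrite /P; apply: le_trans (frob_mulr_le (c := 1) _ _) _.
    by move=> z; rewrite SiT mul1r Si_le1.
  rewrite mul1r; apply: frob_mul_le => z.
  by rewrite mulrC SiLT_le.
have hN : frob N <= 4%:R^-1 * frob Ad.
  rewrite /N -mulmxA; apply: le_trans (frob_mulr_le (c := 4%:R^-1) _ _) _.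
    by move=> z; rewrite trmx_mul SiT mulrC SiLT_le.
  rewrite -(frob_tr Ad); apply: ler_wpM2l; first by rewrite invr_ge0.
  by rewrite -[X in _ <= X]mul1r; apply: frob_mul_le => z; rewrite mul1r Si_le1.
have := frob_add_le P (- N); rewrite frobN => h.
have e : (2%:R : R) ^+ 2 = 4%:R by rewrite -natrX.
rewrite e; have := frob_ge0 Ad; nra.
Qed.

Lemma V_lower Ad : (1 - b2) ^+ 2 * frob Ad <= frob (A *m Ad^T *m A + Ad).
Proof.
rewrite [_ + Ad]addrC; apply: frob_lower => //.
apply: le_trans (frob_mulr_le (c := b2) _ _) _; first by move=> z; exact: hAT.
rewrite expr2 -mulrA; apply: ler_wpM2l => //.
by rewrite -(frob_tr Ad); apply: frob_mul_le.
Qed.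

Lemma W2_mid Ad : ((1 + b2) ^+ 2)^-1 * (((1 + b2) ^+ 2)^-1 * frob (A *m Ad^T *m A + Ad))
   <= frob (invmx (1%:M + A *m A^T) *m (A *m Ad^T *m A + Ad) *m invmx (1%:M + A^T *m A)).
Proof.
set V := A *m Ad^T *m A + Ad.
have h1 : ((1 + b2) ^+ 2)^-1 * frob (invmx (1%:M + A *m A^T) *m V)
    <= frob (invmx (1%:M + A *m A^T) *m V *m invmx (1%:M + A^T *m A)).
  by apply: frob_mulr_ge => z; rewrite SiT; exact: Si_ge.
have h2 : ((1 + b2) ^+ 2)^-1 * frob V <= frob (invmx (1%:M + A *m A^T) *m V).
  apply: frob_mul_ge => z.
  have := @Si_ge _ _ _ A^T b2 b20 hAT; rewrite trmxK; apply => w.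
  exact: hA.
apply: le_trans h1; apply: ler_wpM2l; last exact: h2.
by rewrite invr_ge0 sqr_ge0.
Qed.

Lemma W2_bound Ad : 4%:R * (1 - b2) ^+ 2 / (1 + b2) ^+ 4 * frob Ad <= frob (W2 A Ad).
Proof.
rewrite /W2 frobZ; have e : (2%:R : R) ^+ 2 = 4%:R by rewrite -natrX.
rewrite e; have h := W2_mid Ad; have h2 := V_lower Ad.
have pb : 0 < 1 + b2 by have := b20; lra.
have p0 : 0 < (1 + b2) ^+ 2 by apply: exprn_gt0.
have e4 : (1 + b2) ^+ 4 = (1 + b2) ^+ 2 * (1 + b2) ^+ 2 by rewrite -exprD.
have u0 : 0 <= ((1 + b2) ^+ 2)^-1 by rewrite invr_ge0 ltW.
have h3 : (1 - b2) ^+ 2 / (1 + b2) ^+ 4 * frob Ad <=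
    ((1 + b2) ^+ 2)^-1 * (((1 + b2) ^+ 2)^-1 * frob (A *m Ad^T *m A + Ad)).
  apply: le_trans (ler_wpM2l u0 (ler_wpM2l u0 h2)).
  by rewrite e4 invfM le_eqVlt; apply/orP; left; apply/eqP; ring.
have h4 := le_trans h3 h.
have e5 : 4%:R * (1 - b2) ^+ 2 / (1 + b2) ^+ 4 * frob Ad =
   4%:R * ((1 - b2) ^+ 2 / (1 + b2) ^+ 4 * frob Ad) by ring.
by rewrite e5; apply: ler_wpM2l.
Qed.

Lemma W1_r1 Ad : (r <= 1)%N -> W1 A Ad = 0.
Proof.
move=> r1; rewrite /W1.
have -> : Ad^T *m A = A^T *m Ad by rewrite -[LHS]small_tr // trmx_mul trmxK.
by rewrite subrr mulmx0 mul0mx scaler0.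
Qed.

Lemma W2_r1 Ad : (r <= 1)%N -> 4%:R / (1 + b2) ^+ 2 * frob Ad <= frob (W2 A Ad).
Proof.
move=> r1; rewrite /W2.
have -> : A *m Ad^T *m A + Ad = (1%:M + A *m A^T) *m Ad.
  rewrite -mulmxA (_ : Ad^T *m A = A^T *m Ad); last by rewrite -[LHS]small_tr // trmx_mul trmxK.
  by rewrite mulmxDl mul1mx mulmxA addrC.
rewrite mulmxA mulVmx ?Tu // mul1mx frobZ.
have e : (2%:R : R) ^+ 2 = 4%:R by rewrite -natrX.
rewrite e -mulrA; apply: ler_wpM2l => //.
apply: frob_mulr_ge => z; rewrite SiT; exact: Si_ge.
Qed.

End WB.

Lemma main_ineq r q p1 (A : 'M[R]_(q, r)) (M : 'M[R]_(p1, r)) (a s w : R) :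
  0 < s -> 0 < w ->
  (forall z, nz (M *m z) <= a ^+ 2 * nz z) -> (forall z, s ^+ 2 * nz z <= nz (M *m z)) ->
  (forall Ad, frob (W1 A Ad) <= 4%:R * frob Ad) ->
  (forall Ad, w * frob Ad <= frob (W2 A Ad)) ->
  forall v, (s ^+ 2 * w) / (s ^+ 2 * w + (1 + 8%:R * a ^+ 2)) * nz v
     <= nz (DSigma A M *m v).
Proof.
move=> s0 w0 hM hs hW1 hW2 v.
rewrite -[v]vsubmxK -(vec_surj (usubmx v)) -(vec_surj (dsubmx v)).
set Ad := (vec_mx (usubmx v)^T)^T; set Md := (vec_mx (dsubmx v)^T)^T.
rewrite D_vec nz_vec frob_orth ?QTQ // frob_row_mx nz_col_mx !nz_vec.
have g0 : 0 < s ^+ 2 * w by rewrite mulr_gt0 // exprn_gt0.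
have a0 : 0 <= a ^+ 2 by rewrite sqr_ge0.
apply: (scalar_main (F1 := frob (M *m (W1 A Ad)^T))) => //.
- exact: frob_ge0.
- exact: frob_ge0.
- exact: frob_ge0.
- apply: le_trans (frob_mul_le _ _) _; first exact: hM.
  rewrite (frob_tr (W1 A Ad)); apply: le_trans (ler_wpM2l a0 (hW1 Ad)) _.
  by rewrite le_eqVlt; apply/orP; left; apply/eqP; ring.
- apply: le_trans (frob_mul_ge _ _); last exact: hs.
  rewrite (frob_tr (W2 A Ad)) -mulrA; apply: ler_wpM2l; [exact: sqr_ge0 | exact: hW2].
- rewrite [X in _ <= frob X]addrC; apply: frob_split.
  by rewrite divr_gt0 //; [lra | lra].
Qed.

End Final.

End Helpers.
Import Helpers.

Theorem theorem8 (R : realType) (p1 p2 r : nat)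
  (hr0 : (0 < r)%N) (hr1 : (r <= p1)%N) (hr2 : (r <= p2)%N)
  (A0 : 'M[R]_(p2 - r, r)) (M0 : 'M[R]_(p1, r))
  (hA0 : opnorm A0 < 1) (hM0 : \rank M0 = r) :
  let D := DSigma A0 M0 in
  let a := opnorm M0 in
  let b := opnorm A0 in
  let s := sigma_min M0 in
  (D^T *m D \in unitmx) /\
  opnorm (invmx (D^T *m D)) <=
    (if (2 <= r)%N then
       1 + (1 + 8%:R * a ^+ 2) * (1 + b ^+ 2) ^+ 4
           / (4%:R * s ^+ 2 * (1 - b ^+ 2) ^+ 2)
     else
       1 + (1 + 8%:R * a ^+ 2) * (1 + b ^+ 2) ^+ 2 / (4%:R * s ^+ 2)).
Proof.
move=> D a b s.
have b0 : 0 <= b := opnorm_ge0 A0.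
have hA z : nz (A0 *m z) <= b ^+ 2 * nz z := opnorm_le A0 z.
have hAT := nz_tr_le (sqr_ge0 b) hA.
have hM z : nz (M0 *m z) <= a ^+ 2 * nz z := opnorm_le M0 z.
have [s0 hs] := sigma_min_prop hr0 hM0.
have b21 : b ^+ 2 < 1 by rewrite -(expr1n _ 2); apply: ltrXn2r => //; lra.
have b20 : 0 <= b ^+ 2 := sqr_ge0 b.
have c0 : 0 < 1 + 8%:R * a ^+ 2 by have := sqr_ge0 a; lra.
have s20 : 0 < s ^+ 2 by rewrite exprn_gt0.
case: ifP => hr.
  set w := 4%:R * (1 - b ^+ 2) ^+ 2 / (1 + b ^+ 2) ^+ 4.
  have w0 : 0 < w.
    rewrite /w divr_gt0 ?mulr_gt0 ?exprn_gt0 //; lra.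
  have hm := main_ineq s0 w0 hM hs (W1_bound A0) (W2_bound b20 (ltW b21) hA hAT).
  have k0 : 0 < s ^+ 2 * w / (s ^+ 2 * w + (1 + 8%:R * a ^+ 2)).
    have g0 : 0 < s ^+ 2 * w by rewrite mulr_gt0.
    by rewrite divr_gt0 //; lra.
  have [Hu Hn] := final_gen k0 hm.
  split => //; apply: le_trans Hn _; rewrite le_eqVlt; apply/orP; left; apply/eqP.
  rewrite /w; field.
  have e1 : 0 < 1 - b ^+ 2 by lra.
  have e2 : 0 < 1 + b ^+ 2 by lra.
  have e3 : 0 < (1 + 8%:R * a ^+ 2) * (1 + b ^+ 2) ^+ 4 by rewrite mulr_gt0 // exprn_gt0.
  have e4 : 0 <= s ^+ 2 * (4%:R * (1 - b ^+ 2) ^+ 2) by apply: mulr_ge0; [exact: sqr_ge0 | apply: mulr_ge0; [by [] | exact: sqr_ge0]].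
  rewrite (gt_eqF e1) (gt_eqF s0) (gt_eqF e2) /= gt_eqF //; lra.
have r1 : (r <= 1)%N by move/negbT: hr; rewrite -ltnNge ltnS.
set w := 4%:R / (1 + b ^+ 2) ^+ 2.
have w0 : 0 < w by rewrite /w divr_gt0 ?exprn_gt0 //; lra.
have hW1 : forall Ad, frob (W1 A0 Ad) <= 4%:R * frob Ad.
  have f0 : frob (0 : 'M[R]_(r, r)) = 0.
    by rewrite -(scale0r (0 : 'M[R]_(r, r))) frobZ expr0n mul0r.
  by move=> Ad; rewrite W1_r1 // f0 mulr_ge0 ?frob_ge0.
have hm := main_ineq s0 w0 hM hs hW1 (fun Ad => W2_r1 b20 hA hAT Ad r1).
have k0 : 0 < s ^+ 2 * w / (s ^+ 2 * w + (1 + 8%:R * a ^+ 2)).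
  have g0 : 0 < s ^+ 2 * w by rewrite mulr_gt0.
  by rewrite divr_gt0 //; lra.
have [Hu Hn] := final_gen k0 hm.
split => //; apply: le_trans Hn _; rewrite le_eqVlt; apply/orP; left; apply/eqP.
rewrite /w; field.
have e2 : 0 < 1 + b ^+ 2 by lra.
have e3 : 0 < (1 + 8%:R * a ^+ 2) * (1 + b ^+ 2) ^+ 2 by rewrite mulr_gt0 // exprn_gt0.
rewrite (gt_eqF s0) (gt_eqF e2) /= gt_eqF //; lra.
Qed.
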